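(* If $P_2$ is strictly increasing on $[0,1]$, then there exists at most one sequence $T=(T_k)\in\mathcal{T}$ satisfying $$\exp\left(\int_0^x\log\bigl(1-P_1(T_k(\alpha))\bigr)\,d\alpha\right)+\prod_{i=1}^k\bigl(1-P_2(T_i(x))\bigr)=1\qquad\text{for all }x\ge0,\ k\in\mathbb{N}.$$
   Context: $P_1,P_2:[0,1]\to[0,1]$ are continuously differentiable, increasing, $P_j(0)=0$, $P_j(1)=1$, $P_j(t)<1$ for $t<1$. The class $\mathcal{T}$: all sequences $T=(T_1,T_2,\dots)$ of functions on $[0,\infty)$ such that each $T_k$ is continuous on $[0,\infty)$ and continuously differentiable on $(0,\infty)$; $0<T_k(x)\le1$; $T_k'(x)<0$ and $T_{k+1}(x)<T_k(x)$ for $x>0$; $T_k(0)=1$. *)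

(* Defs.v *)
From Stdlib Require Import Reals Lra.
Open Scope R_scope.

Definition cont_on_closed (f : R -> R) (a b : R) : Prop :=
  forall x, a <= x <= b ->
    limit1_in f (fun y => a <= y <= b) (f x) x.

Definition deriv_within (f : R -> R) (a b x l : R) : Prop :=
  limit1_in (fun h => (f (x + h) - f x) / h)
            (fun h => h <> 0 /\ a <= x + h <= b) l 0.

Definition admissible_P (P : R -> R) : Prop :=
  (forall t, 0 <= t <= 1 -> 0 <= P t <= 1) /\
  (exists dP : R -> R,
      (forall x, 0 <= x <= 1 -> deriv_within P 0 1 x (dP x)) /\
      cont_on_closed dP 0 1) /\
  (forall s t, 0 <= s <= 1 -> 0 <= t <= 1 -> s <= t -> P s <= P t) /\
  P 0 = 0 /\ P 1 = 1 /\
  (forall t, 0 <= t < 1 -> P t < 1).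

Definition strictly_increasing_01 (P : R -> R) : Prop :=
  forall s t, 0 <= s <= 1 -> 0 <= t <= 1 -> s < t -> P s < P t.

(* The class \mathcal{T}.  The sequence (T_1, T_2, ...) is represented by
   T : nat -> R -> R with T n standing for T_{n+1}. *)
Definition in_class_T (T : nat -> R -> R) : Prop :=
  forall n : nat,
    (forall x, 0 <= x -> limit1_in (T n) (fun y => 0 <= y) (T n x) x) /\
    (exists dT : R -> R,
        (forall x, 0 < x -> derivable_pt_lim (T n) x (dT x)) /\
        (forall x, 0 < x -> continuity_pt dT x) /\
        (forall x, 0 < x -> dT x < 0)) /\
    (forall x, 0 <= x -> 0 < T n x <= 1) /\
    (forall x, 0 < x -> T (S n) x < T n x) /\
    T n 0 = 1.

(* "exp (int_0^x f)" equals L, the integral being improper at 0: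
   exp (int_e^x f) -> L as e -> 0+ (with exp(-oo) = 0 convention);
   for x = 0 the integral is 0. *)
Definition exp_int_from0 (f : R -> R) (x L : R) : Prop :=
  (x = 0 /\ L = 1) \/
  (0 < x /\
   forall eps, 0 < eps -> exists delta, 0 < delta /\
     forall e, 0 < e < delta -> e <= x ->
       exists pr : Riemann_integrable f e x,
         Rabs (exp (RiemannInt pr) - L) < eps).

(* The functional equation, for all x >= 0 and k >= 1 (k = n+1):
   exp(int_0^x log(1 - P1(T_k a)) da) + prod_{i=1}^k (1 - P2(T_i x)) = 1. *)
Definition solves_eq (P1 P2 : R -> R) (T : nat -> R -> R) : Prop :=
  forall (n : nat) (x : R), 0 <= x ->
    exp_int_from0 (fun a => ln (1 - P1 (T n a))) x
      (1 - prod_f_R0 (fun i => 1 - P2 (T i x)) n).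

(* Main.v *)
Require Import Defs.
From Stdlib Require Import Reals Lra Lia Arith Classical.
Open Scope R_scope.

Lemma exp_le' x y : x <= y -> exp x <= exp y.
Proof. intros H; destruct (Rle_lt_or_eq_dec _ _ H) as [h|h];
  [left; apply exp_increasing; auto | subst; lra]. Qed.

Lemma ln_le' x y : 0 < x -> x <= y -> ln x <= ln y.
Proof. intros H0 H; destruct (Rle_lt_or_eq_dec _ _ H) as [h|h];
  [left; apply ln_increasing; auto | subst; lra]. Qed.

Lemma exp_int_pos_case f x L : 0 < x -> exp_int_from0 f x L ->
  forall eps, 0 < eps -> exists delta, 0 < delta /\
     forall e, 0 < e < delta -> e <= x ->
       exists pr : Riemann_integrable f e x,
         Rabs (exp (RiemannInt pr) - L) < eps.
Proof. intros Hx [[H _]|[_ H]]; [lra|exact H]. Qed.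

Lemma exp_int_nonneg f x L : 0 < x -> exp_int_from0 f x L -> 0 <= L.
Proof.
  intros Hx H. destruct (Rle_dec 0 L) as [|Hn]; [auto|].
  destruct (exp_int_pos_case f x L Hx H (-L)) as [d [Hd Hf]]; [lra|].
  set (m := Rmin d x).
  assert (Hm : 0 < m) by (apply Rmin_pos; lra).
  assert (Hm1 : m <= d) by apply Rmin_l.
  assert (Hm2 : m <= x) by apply Rmin_r.
  destruct (Hf (m/2)) as [pr Hpr]; [lra|lra|].
  pose proof (exp_pos (RiemannInt pr)).
  pose proof (Rle_abs (exp (RiemannInt pr) - L)). lra.
Qed.

Lemma exp_int_split f a x La L (pr : Riemann_integrable f a x) :
  0 < a -> a < x -> exp_int_from0 f a La -> exp_int_from0 f x L ->
  L = La * exp (RiemannInt pr).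
Proof.
  intros Ha Hax HA HX.
  set (E := exp (RiemannInt pr)).
  assert (HE : 0 < E) by apply exp_pos.
  destruct (Req_dec L (La*E)) as [|Hne]; [auto|exfalso].
  set (d := Rabs (L - La*E)).
  assert (Hd : 0 < d) by (apply Rabs_pos_lt; lra).
  set (eps := d / (1 + E)).
  assert (Heps : 0 < eps) by (unfold eps; apply Rdiv_lt_0_compat; lra).
  destruct (exp_int_pos_case f x L ltac:(lra) HX eps Heps) as [d1 [Hd1 H1]].
  destruct (exp_int_pos_case f a La Ha HA eps Heps) as [d2 [Hd2 H2]].
  set (m := Rmin d1 (Rmin d2 a)).
  assert (Hm1 : m <= d1) by apply Rmin_l.
  assert (Hm2 : m <= d2) by (eapply Rle_trans; [apply Rmin_r| apply Rmin_l]).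
  assert (Hm3 : m <= a) by (eapply Rle_trans; [apply Rmin_r| apply Rmin_r]).
  assert (Hm : 0 < m) by (apply Rmin_pos; [lra| apply Rmin_pos; lra]).
  destruct (H1 (m/2)) as [pr1 Hp1]; [lra|lra|].
  destruct (H2 (m/2)) as [pr2 Hp2]; [lra|lra|].
  assert (Hc : RiemannInt pr2 + RiemannInt pr = RiemannInt pr1) by apply RiemannInt_P26.
  assert (Hexp : exp (RiemannInt pr1) = exp (RiemannInt pr2) * E)
    by (rewrite <- Hc; apply exp_plus).
  assert (Hkey : L - La*E = - (exp (RiemannInt pr1) - L) + (exp (RiemannInt pr2) - La) * E)
    by (rewrite Hexp; ring).
  assert (Hle : d <= Rabs (exp (RiemannInt pr1) - L) + Rabs (exp (RiemannInt pr2) - La) * E).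
  { unfold d; rewrite Hkey. eapply Rle_trans; [apply Rabs_triang|].
    rewrite Rabs_Ropp, Rabs_mult, (Rabs_right E) by lra. lra. }
  assert (Hde : eps * (1 + E) = d) by (unfold eps; field; lra).
  assert (Rabs (exp (RiemannInt pr2) - La) * E < eps * E) by (apply Rmult_lt_compat_r; lra).
  lra.
Qed.

Lemma half (P1 P2 : R -> R) (u v c : R -> R) :
  admissible_P P1 -> admissible_P P2 -> strictly_increasing_01 P2 ->
  (forall x, 0 <= x -> exp_int_from0 (fun a => ln (1 - P1 (u a))) x (1 - c x * (1 - P2 (u x)))) ->
  (forall x, 0 <= x -> exp_int_from0 (fun a => ln (1 - P1 (v a))) x (1 - c x * (1 - P2 (v x)))) ->
  (forall x, 0 < x -> 0 < c x) ->
  (forall x, 0 < x -> continuity_pt u x) -> (forall x, 0 < x -> continuity_pt v x) ->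
  (forall x, 0 < x -> 0 < u x < 1) -> (forall x, 0 < x -> 0 < v x < 1) ->
  forall x, 0 < x -> u x <= v x.
Proof.
  intros [_ [_ [M1 [_ [_ L1]]]]] [_ [_ [M2 _]]] S2 Hu Hv Hc Cu Cv Bu Bv x0 Hx0.
  destruct (Rle_dec (u x0) (v x0)) as [|Hn]; [auto|exfalso].
  apply Rnot_le_lt in Hn.
  assert (HL : forall x, 0 < x -> v x < u x ->
            1 - c x * (1 - P2 (v x)) < 1 - c x * (1 - P2 (u x))).
  { intros x Hx H. pose proof (Bu x Hx). pose proof (Bv x Hx).
    assert (P2 (v x) < P2 (u x)) by (apply S2; lra). pose proof (Hc x Hx). nra. }
  assert (HLe : forall x, 0 < x -> u x <= v x ->
            1 - c x * (1 - P2 (u x)) <= 1 - c x * (1 - P2 (v x))).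
  { intros x Hx H. pose proof (Bu x Hx). pose proof (Bv x Hx).
    assert (P2 (u x) <= P2 (v x)) by (apply M2; lra). pose proof (Hc x Hx). nra. }
  assert (Hf : forall t, 0 < t -> v t <= u t -> ln (1 - P1 (u t)) <= ln (1 - P1 (v t))).
  { intros t Ht H. pose proof (Bu t Ht). pose proof (Bv t Ht).
    assert (P1 (v t) <= P1 (u t)) by (apply M1; lra).
    assert (P1 (u t) < 1) by (apply L1; lra).
    apply ln_le'; lra. }
  set (Lu := 1 - c x0 * (1 - P2 (u x0))).
  set (Lv := 1 - c x0 * (1 - P2 (v x0))).
  assert (HLuv : Lv < Lu) by (apply HL; auto).
  destruct (classic (exists s, 0 < s <= x0 /\ u s <= v s)) as [Hex|Hnex].
  - set (ES := fun s => 0 < s <= x0 /\ u s <= v s).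
    destruct (completeness ES) as [a [Hub Hlub]].
    + exists x0. intros s [Hs _]. lra.
    + exact Hex.
    + destruct Hex as [s Hs].
      assert (Has : s <= a) by (apply Hub; exact Hs).
      assert (Ha0 : 0 < a) by lra.
      assert (Hax : a <= x0) by (apply Hlub; intros t [Ht _]; lra).
      assert (Hua : u a <= v a).
      { destruct (Rle_dec (u a) (v a)) as [|Hna]; [auto|exfalso].
        apply Rnot_le_lt in Hna.
        pose proof (continuity_pt_minus u v a (Cu a Ha0) (Cv a Ha0)) as Hg.
        unfold continuity_pt, continue_in, limit1_in, limit_in in Hg.
        destruct (Hg (u a - v a)) as [alp [Halp Hg']]; [lra|].
        assert (Hex2 : exists t, ES t /\ a - alp < t).
        { apply NNPP; intro Hno.
          assert (is_upper_bound ES (a - alp)).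
          { intros t Ht. destruct (Rle_dec t (a - alp)) as [|Hn2]; [auto|].
            exfalso; apply Hno; exists t; split; [auto|lra]. }
          pose proof (Hlub _ H). lra. }
        destruct Hex2 as [t [Ht Hta]].
        assert (t <= a) by (apply Hub; exact Ht).
        destruct Ht as [Ht1 Ht2].
        destruct (Req_dec t a) as [->|Hne]; [lra|].
        specialize (Hg' t). simpl in Hg'. unfold R_dist, D_x, no_cond in Hg'.
        unfold minus_fct in Hg'.
        assert (Hd : Rabs (u t - v t - (u a - v a)) < u a - v a).
        { apply Hg'. split; [split; [auto| congruence]|].
          rewrite Rabs_left; lra. }
        apply Rabs_def2 in Hd. lra. }
      assert (Hax' : a < x0) by (destruct (Rle_lt_or_eq_dec _ _ Hax) as [hh|hh]; [exact hh| rewrite hh in Hua; lra]).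
      assert (Hgt : forall t, a < t <= x0 -> v t < u t).
      { intros t Ht. destruct (Rle_dec (u t) (v t)) as [Hle|Hn2].
        - assert (t <= a) by (apply Hub; unfold ES; split; [split; lra| exact Hle]). lra.
        - lra. }
      destruct (exp_int_pos_case _ x0 _ ltac:(lra) (Hu x0 ltac:(lra)) 1 ltac:(lra)) as [du [Hdu Hu1]].
      destruct (exp_int_pos_case _ x0 _ ltac:(lra) (Hv x0 ltac:(lra)) 1 ltac:(lra)) as [dv [Hdv Hv1]].
      set (m := Rmin (Rmin du dv) a).
      assert (Hm1 : m <= du) by (eapply Rle_trans; [apply Rmin_l| apply Rmin_l]).
      assert (Hm2 : m <= dv) by (eapply Rle_trans; [apply Rmin_l| apply Rmin_r]).
      assert (Hm3 : m <= a) by apply Rmin_r.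
      assert (Hm : 0 < m) by (apply Rmin_pos; [apply Rmin_pos|]; lra).
      destruct (Hu1 (m/2)) as [pru0 _]; [lra|lra|].
      destruct (Hv1 (m/2)) as [prv0 _]; [lra|lra|].
      pose (pru := RiemannInt_P23 pru0 (conj (ltac:(lra) : m/2 <= a) Hax)).
      pose (prv := RiemannInt_P23 prv0 (conj (ltac:(lra) : m/2 <= a) Hax)).
      assert (Eu := exp_int_split _ _ _ _ _ pru Ha0 Hax' (Hu a ltac:(lra)) (Hu x0 ltac:(lra))).
      assert (Ev := exp_int_split _ _ _ _ _ prv Ha0 Hax' (Hv a ltac:(lra)) (Hv x0 ltac:(lra))).
      assert (HI : RiemannInt pru <= RiemannInt prv).
      { apply RiemannInt_P19; [lra|]. intros t Ht. apply Hf; [lra|].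
        left; apply Hgt; lra. }
      apply exp_le' in HI.
      pose proof (exp_pos (RiemannInt pru)).
      pose proof (exp_int_nonneg _ _ _ Ha0 (Hu a ltac:(lra))).
      pose proof (exp_int_nonneg _ _ _ Ha0 (Hv a ltac:(lra))).
      pose proof (HLe a Ha0 Hua).
      fold Lu in Eu. fold Lv in Ev. nra.
  - assert (Hall : forall s, 0 < s <= x0 -> v s < u s).
    { intros s Hs. destruct (Rle_dec (u s) (v s)); [|lra].
      exfalso; apply Hnex; exists s; auto. }
    set (eps := (Lu - Lv)/2).
    destruct (exp_int_pos_case _ _ _ Hx0 (Hu x0 ltac:(lra)) eps ltac:(unfold eps; lra)) as [du [Hdu Hu1]].
    destruct (exp_int_pos_case _ _ _ Hx0 (Hv x0 ltac:(lra)) eps ltac:(unfold eps; lra)) as [dv [Hdv Hv1]].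
    set (m := Rmin (Rmin du dv) x0).
    assert (Hm1 : m <= du) by (eapply Rle_trans; [apply Rmin_l| apply Rmin_l]).
    assert (Hm2 : m <= dv) by (eapply Rle_trans; [apply Rmin_l| apply Rmin_r]).
    assert (Hm3 : m <= x0) by apply Rmin_r.
    assert (Hm : 0 < m) by (apply Rmin_pos; [apply Rmin_pos|]; lra).
    destruct (Hu1 (m/2)) as [pru Hpu]; [lra|lra|].
    destruct (Hv1 (m/2)) as [prv Hpv]; [lra|lra|].
    assert (HI : RiemannInt pru <= RiemannInt prv).
    { apply RiemannInt_P19; [lra|]. intros t Ht. apply Hf; [lra|].
      left; apply Hall; lra. }
    apply exp_le' in HI.
    apply Rabs_def2 in Hpu. apply Rabs_def2 in Hpv.
    fold Lu in Hpu. fold Lv in Hpv. unfold eps in *. lra.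
Qed.

Lemma prod_ext (f g : nat -> R) m : (forall i, (i <= m)%nat -> f i = g i) ->
  prod_f_R0 f m = prod_f_R0 g m.
Proof.
  induction m; intros H; simpl.
  - apply H; lia.
  - rewrite IHm by (intros; apply H; lia). rewrite (H (S m)) by lia. reflexivity.
Qed.

Lemma prod_pos (f : nat -> R) m : (forall i, (i <= m)%nat -> 0 < f i) -> 0 < prod_f_R0 f m.
Proof.
  induction m; intros H; simpl.
  - apply H; lia.
  - apply Rmult_lt_0_compat; [apply IHm; intros; apply H; lia| apply H; lia].
Qed.

Lemma T_lt1 T : in_class_T T -> forall i x, 0 < x -> T i x < 1.
Proof.
  intros HT i x Hx. destruct (HT i) as [_ [[dT [Hd [_ Hneg]]] [Hb _]]].
  destruct (Hb x ltac:(lra)) as [_ Hle].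
  destruct (Rle_lt_or_eq_dec _ _ Hle) as [|Heq]; [auto|exfalso].
  pose proof (Hneg x Hx) as Hn. specialize (Hd x Hx).
  destruct (Hd (- dT x) ltac:(lra)) as [del Hdel].
  set (h := - Rmin (del/2) (x/2)).
  assert (Hm : 0 < Rmin (del/2) (x/2)) by (apply Rmin_pos; pose proof (cond_pos del); lra).
  assert (Hm1 : Rmin (del/2) (x/2) <= del/2) by apply Rmin_l.
  assert (Hm2 : Rmin (del/2) (x/2) <= x/2) by apply Rmin_r.
  pose proof (cond_pos del).
  assert (Hq := Hdel h ltac:(unfold h; lra) ltac:(unfold h; rewrite Rabs_Ropp, Rabs_right; lra)).
  apply Rabs_def2 in Hq.
  set (q := (T i (x + h) - T i x) / h) in *.
  assert (Hqh : T i (x + h) - T i x = q * h) by (unfold q; field; unfold h; lra).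
  destruct (Hb (x + h) ltac:(unfold h; lra)) as [_ Hb2].
  assert (q * h > 0) by (unfold h in *; nra). lra.
Qed.

Theorem corollary3 (P1 P2 : R -> R) :
  admissible_P P1 -> admissible_P P2 ->
  strictly_increasing_01 P2 ->
  forall T T' : nat -> R -> R,
    in_class_T T -> solves_eq P1 P2 T ->
    in_class_T T' -> solves_eq P1 P2 T' ->
    forall (n : nat) (x : R), 0 <= x -> T n x = T' n x.
Proof.
  intros HP1 HP2 S2 T T' HT HsT HT' HsT' n.
  induction n as [n IH] using lt_wf_ind.
  set (c := fun x => match n with O => 1 | S m => prod_f_R0 (fun i => 1 - P2 (T i x)) m end).
  assert (Hpr : forall x, prod_f_R0 (fun i => 1 - P2 (T i x)) n = c x * (1 - P2 (T n x))).
  { intros x; unfold c; destruct n; simpl; ring. }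
  assert (Hpr' : forall x, 0 <= x -> prod_f_R0 (fun i => 1 - P2 (T' i x)) n = c x * (1 - P2 (T' n x))).
  { intros x Hx; unfold c; destruct n; simpl; [ring|].
    rewrite (prod_ext (fun i => 1 - P2 (T' i x)) (fun i => 1 - P2 (T i x))); [reflexivity|].
    intros i Hi. rewrite (IH i) by (auto; lia). reflexivity. }
  pose proof HP2 as HP2'.
  destruct HP2 as [B2 [D2 [M2 [Z2 [O2 L2]]]]].
  assert (Hfac : forall T0, in_class_T T0 -> forall i x, 0 < x -> 0 < 1 - P2 (T0 i x)).
  { intros T0 H0 i x Hx. pose proof (T_lt1 T0 H0 i x Hx).
    destruct (H0 i) as [_ [_ [Hb _]]]. destruct (Hb x ltac:(lra)).
    assert (P2 (T0 i x) < 1) by (apply L2; lra). lra. }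
  assert (Hcpos : forall x, 0 < x -> 0 < c x).
  { intros x Hx; unfold c; destruct n; [lra|]. apply prod_pos. intros; apply Hfac; auto. }
  assert (Hcont : forall T0, in_class_T T0 -> forall x, 0 < x -> continuity_pt (T0 n) x).
  { intros T0 H0 x Hx. destruct (H0 n) as [_ [[dT [Hd _]] _]].
    apply derivable_continuous_pt. exists (dT x). apply Hd; auto. }
  assert (Hb01 : forall T0, in_class_T T0 -> forall x, 0 < x -> 0 < T0 n x < 1).
  { intros T0 H0 x Hx. destruct (H0 n) as [_ [_ [Hb _]]]. destruct (Hb x ltac:(lra)).
    split; [auto| apply T_lt1; auto]. }
  assert (Eu : forall x, 0 <= x -> exp_int_from0 (fun a => ln (1 - P1 (T n a))) x (1 - c x * (1 - P2 (T n x)))).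
  { intros x Hx. rewrite <- Hpr. apply HsT; auto. }
  assert (Ev : forall x, 0 <= x -> exp_int_from0 (fun a => ln (1 - P1 (T' n a))) x (1 - c x * (1 - P2 (T' n x)))).
  { intros x Hx. rewrite <- Hpr' by auto. apply HsT'; auto. }
  intros x Hx. destruct (Rle_lt_or_eq_dec _ _ Hx) as [Hx0|<-].
  - apply Rle_antisym.
    + apply (half P1 P2 (T n) (T' n) c); auto.
    + apply (half P1 P2 (T' n) (T n) c); auto.
  - destruct (HT n) as [_ [_ [_ [_ H1]]]]. destruct (HT' n) as [_ [_ [_ [_ H2]]]]. congruence.
Qed.
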